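(* Let $P$ and $Q$ be planar surfaces. If $P \rightsquigarrow Q$ and $Q \rightsquigarrow P$, then $P = Q$ (i.e. $P$ and $Q$ are the same point of $\tilde{\mathcal M}$). Consequently $\rightsquigarrow$ is a partial order on $\tilde{\mathcal M}$.
   Context: Let $\Delta$ be the open oriented topological $2$-disk with basepoint $x_0$. A pointed local homeomorphism is an orientation-preserving local homeomorphism $\phi:\Delta\to\mathbb R^2$ with $\phi(x_0)=\mathbf 0$ (this is the developing map of a translation structure on $\Delta$). Two such maps $\phi,\psi$ are isomorphic if $\psi=\phi\circ h^{-1}$ for some orientation-preserving homeomorphism $h$ of $\Delta$ fixing $x_0$. The moduli space $\tilde{\mathcal M}$ is the set of isomorphism classes. An element $P\in\tilde{\mathcal M}$ is called a planar surface; it is regarded as a topological open disk (a copy of $\Delta$ via any representative $\phi$) with a basepoint $o_P$ (the image of $x_0$) and a developing map $\mathrm{dev}_P:P\to\mathbb R^2$ (induced by $\phi$), an orientation-preserving local homeomorphism with $\mathrm{dev}_P(o_P)=\mathbf 0$; these structures are independent of the representative. For a planar surface $P$, $\mathrm{PC}(P)$ denotes the set of path-connected subsets of $P$ containing $o_P$. For $A\in\mathrm{PC}(P)$ and $B\in\mathrm{PC}(Q)$, an immersion $\iota:A\rightsquigarrow B$ is a continuous map $\iota:A\to B$ with $\iota(o_P)=o_Q$ and $\mathrm{dev}_Q\circ\iota=\mathrm{dev}_P$ on $A$; we write $A\rightsquigarrow B$ if an immersion exists. For planar surfaces, $P\rightsquigarrow Q$ means the whole surface $P$ immerses in $Q$.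 *)

(* Defs.v *)
From Stdlib Require Import Reals.
Open Scope R_scope.

Definition pt : Type := (R * R)%type.
Definition origin : pt := (0, 0).
Definition dist (p q : pt) : R :=
  sqrt ((fst p - fst q) ^ 2 + (snd p - snd q) ^ 2).

Definition cont_at (f : pt -> pt) (x : pt) : Prop :=
  forall eps, 0 < eps -> exists del, 0 < del /\
    forall y, dist x y < del -> dist (f x) (f y) < eps.
Definition continuous2 (f : pt -> pt) : Prop := forall x, cont_at f x.

Definition is_open (U : pt -> Prop) : Prop :=
  forall y, U y -> exists e, 0 < e /\ forall z, dist y z < e -> U z.

(* f is a local homeomorphism: continuous, and every point has an open
   neighbourhood on which f is injective and open (hence a homeomorphism
   onto an open image). *)
Definition local_homeo (f : pt -> pt) : Prop :=
  continuous2 f /\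
  forall x, exists U : pt -> Prop,
    is_open U /\ U x /\
    (forall y z, U y -> U z -> f y = f z -> y = z) /\
    (forall V : pt -> Prop, is_open V -> (forall y, V y -> U y) ->
        is_open (fun w => exists y, V y /\ f y = w)).

Definition homeo (h : pt -> pt) : Prop :=
  continuous2 h /\ exists g, continuous2 g /\
    (forall x, g (h x) = x) /\ (forall y, h (g y) = y).

Definition circ (x : pt) (s t : R) : pt :=
  (fst x + s * cos (2 * PI * t), snd x + s * sin (2 * PI * t)).

(* The loop gamma : [0,1] -> R^2 avoids p and has winding number +1 about p:
   there is a continuous angle lift theta on [0,1] with total increase 2*PI. *)
Definition winds_once (gamma : R -> pt) (p : pt) : Prop :=
  exists theta : R -> R,
    (forall t, 0 <= t <= 1 -> forall eps, 0 < eps -> exists del, 0 < del /\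
       forall u, 0 <= u <= 1 -> Rabs (t - u) < del -> Rabs (theta t - theta u) < eps) /\
    (forall t, 0 <= t <= 1 ->
       0 < dist (gamma t) p /\
       fst (gamma t) - fst p = dist (gamma t) p * cos (theta t) /\
       snd (gamma t) - snd p = dist (gamma t) p * sin (theta t)) /\
    theta 1 - theta 0 = 2 * PI.

(* Orientation preserving: small circles around every point are mapped to
   loops winding once (counterclockwise) around the image point, i.e. the
   local degree is +1 everywhere. *)
Definition orientation_preserving (f : pt -> pt) : Prop :=
  forall x, exists r, 0 < r /\ forall s, 0 < s < r ->
    winds_once (fun t => f (circ x s t)) (f x).

(* Pointed local homeomorphism Delta -> R^2, with Delta modelled as R^2
   (an open oriented 2-disk) and basepoint x0 = origin. *)
Definition pointed_lh (phi : pt -> pt) : Prop :=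
  local_homeo phi /\ orientation_preserving phi /\ phi origin = origin.

(* Isomorphism of pointed local homeomorphisms: psi = phi o h^{-1}, i.e.
   psi o h = phi, with h an orientation-preserving homeomorphism fixing x0.
   Two maps are isomorphic iff they define the same planar surface. *)
Definition iso (phi psi : pt -> pt) : Prop :=
  exists h, homeo h /\ orientation_preserving h /\ h origin = origin /\
    forall x, psi (h x) = phi x.

(* The planar surface of phi immerses in that of psi (P ~> Q):
   a continuous basepoint-preserving map iota with dev_Q o iota = dev_P. *)
Definition immerses (phi psi : pt -> pt) : Prop :=
  exists iota, continuous2 iota /\ iota origin = origin /\
    forall x, psi (iota x) = phi x.

(* Main.v *)
Require Import Defs.
From Stdlib Require Import Reals.
From Stdlib Require Import Reals Rgeom Lra ClassicalEpsilon Classical.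
Import Defs.
Open Scope R_scope.

Lemma dist_sq a b : dist a b = sqrt ((fst a - fst b)^2 + (snd a - snd b)^2).
Proof. reflexivity. Qed.

Lemma dist_nonneg a b : 0 <= dist a b.
Proof. apply sqrt_pos. Qed.

Lemma dist_sym a b : dist a b = dist b a.
Proof. unfold dist. f_equal. ring. Qed.

Lemma dist_refl a : dist a a = 0.
Proof. unfold dist. replace ((fst a - fst a) ^ 2 + (snd a - snd a) ^ 2) with 0 by ring. apply sqrt_0. Qed.

Lemma dist_tri a b c : dist a c <= dist a b + dist b c.
Proof.
  unfold dist. pose proof (triangle (fst a) (snd a) (fst c) (snd c) (fst b) (snd b)) as H.
  unfold dist_euc, Rsqr in H. simpl. replace ((fst a - fst c) * ((fst a - fst c) * 1)) with ((fst a - fst c) * (fst a - fst c)) by ring.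
  replace ((snd a - snd c) * ((snd a - snd c) * 1)) with ((snd a - snd c) * (snd a - snd c)) by ring.
  replace ((fst a - fst b) * ((fst a - fst b) * 1)) with ((fst a - fst b) * (fst a - fst b)) by ring.
  replace ((snd a - snd b) * ((snd a - snd b) * 1)) with ((snd a - snd b) * (snd a - snd b)) by ring.
  replace ((fst b - fst c) * ((fst b - fst c) * 1)) with ((fst b - fst c) * (fst b - fst c)) by ring.
  replace ((snd b - snd c) * ((snd b - snd c) * 1)) with ((snd b - snd c) * (snd b - snd c)) by ring.
  exact H.
Qed.

Lemma dist_fst a b : Rabs (fst a - fst b) <= dist a b.
Proof.
  unfold dist. rewrite <- sqrt_Rsqr_abs. apply sqrt_le_1_alt. unfold Rsqr.
  pose proof (pow2_ge_0 (snd a - snd b)). simpl in *. nra.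
Qed.

Lemma dist_snd a b : Rabs (snd a - snd b) <= dist a b.
Proof.
  unfold dist. rewrite <- sqrt_Rsqr_abs. apply sqrt_le_1_alt. unfold Rsqr.
  pose proof (pow2_ge_0 (fst a - fst b)). simpl in *. nra.
Qed.

Lemma dist_le_sum a b : dist a b <= Rabs (fst a - fst b) + Rabs (snd a - snd b).
Proof.
  unfold dist. set (x := fst a - fst b). set (y := snd a - snd b).
  rewrite <- (sqrt_Rsqr (Rabs x + Rabs y)).
  2:{ pose proof (Rabs_pos x); pose proof (Rabs_pos y); lra. }
  apply sqrt_le_1_alt. unfold Rsqr. pose proof (Rabs_pos x); pose proof (Rabs_pos y).
  assert (x^2 = Rabs x * Rabs x). { pose proof (Rsqr_abs x). unfold Rsqr in *. simpl. lra. }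
  assert (y^2 = Rabs y * Rabs y). { pose proof (Rsqr_abs y). unfold Rsqr in *. simpl. lra. }
  nra.
Qed.

Lemma Rabs0 x : Rabs x = 0 -> x = 0.
Proof. unfold Rabs. destruct (Rcase_abs x); lra. Qed.

Lemma dist_eq0 a b : dist a b = 0 -> a = b.
Proof.
  intro H. pose proof (dist_fst a b) as H1. pose proof (dist_snd a b) as H2. rewrite H in *.
  destruct a as [a1 a2], b as [b1 b2]; simpl in *. pose proof (Rabs_pos (a1 - b1)); pose proof (Rabs_pos (a2 - b2)).
  assert (E1 : Rabs (a1 - b1) = 0) by lra. assert (E2: Rabs (a2 - b2) = 0) by lra.
  apply Rabs0 in E1; apply Rabs0 in E2. f_equal; lra.
Qed.

Lemma dist_pos a b : a <> b -> 0 < dist a b.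
Proof. intro H. destruct (dist_nonneg a b); auto. exfalso. apply H, dist_eq0. auto. Qed.

Lemma dist_polar (q : pt) (r th : R) : 0 <= r ->
  dist (fst q + r * cos th, snd q + r * sin th) q = r.
Proof.
  intro Hr. unfold dist. simpl.
  replace ((fst q + r * cos th - fst q) * ((fst q + r * cos th - fst q) * 1) +
   (snd q + r * sin th - snd q) * ((snd q + r * sin th - snd q) * 1)) with (r * r * (Rsqr (sin th) + Rsqr (cos th))) by (unfold Rsqr; ring).
  rewrite sin2_cos2, Rmult_1_r. apply sqrt_square. auto.
Qed.

Lemma cpt_elim f x : continuity_pt f x -> forall eps, 0 < eps ->
  exists d, 0 < d /\ forall y, Rabs (y - x) < d -> Rabs (f y - f x) < eps.
Proof.
  intros H eps He. destruct (H eps He) as [d [Hd Hy]]. exists d. split; auto.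
  intros y Hy'. destruct (Req_dec y x) as [->|Hne].
  - unfold Rminus. rewrite Rplus_opp_r, Rabs_R0. auto.
  - apply (Hy y). split; auto. split. exact I. auto.
Qed.

Lemma cpt_intro f x : (forall eps, 0 < eps ->
  exists d, 0 < d /\ forall y, Rabs (y - x) < d -> Rabs (f y - f x) < eps) -> continuity_pt f x.
Proof.
  intros H eps He. destruct (H eps He) as [d [Hd Hy]]. exists d. split; auto.
  intros y [_ Hy']. apply Hy. exact Hy'.
Qed.

Lemma real_ind (P : R -> Prop) :
  (forall t, 0 <= t <= 1 -> (forall s, 0 <= s < t -> P s) ->
     exists d, 0 < d /\ forall s, 0 <= s <= 1 -> s < t + d -> P s) ->
  forall t, 0 <= t <= 1 -> P t.
Proof.
  intros H.
  set (E := fun t => t <= 2 /\ forall s, 0 <= s <= 1 -> s < t -> P s).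
  assert (Hb : bound E). { exists 2. intros x [Hx _]. auto. }
  assert (He : exists x, E x). { exists 0. split. lra. intros s Hs Hs'. lra. }
  destruct (completeness E Hb He) as [m [Hub Hlub]].
  assert (H0m : 0 <= m). { apply Hub. split. lra. intros; lra. }
  assert (Hm2 : m <= 2). { apply Hlub. intros x [Hx _]. auto. }
  assert (Hbelow : forall s, 0 <= s <= 1 -> s < m -> P s).
  { intros s Hs Hsm. apply NNPP. intro HP.
    assert (Hs2 : is_upper_bound E s).
    { intros x [Hx2 Hx]. destruct (Rle_lt_dec x s); auto. exfalso. apply HP. apply Hx; auto. }
    apply Hlub in Hs2. lra. }
  destruct (Rle_lt_dec m 1) as [Hm1|Hm1].
  - destruct (H m (conj H0m Hm1)) as [d [Hd Hd']].
    { intros s Hs. apply Hbelow; lra. }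
    assert (E (Rmin (m + d) 2)).
    { split. apply Rmin_r. intros s Hs Hs'. apply Hd'; auto. pose proof (Rmin_l (m+d) 2). lra. }
    apply Hub in H0. unfold Rmin in H0. destruct (Rle_dec (m+d) 2); lra.
  - intros t Ht. apply Hbelow; lra.
Qed.

Definition cont1 (F : R -> pt) : Prop := forall t eps, 0 < eps -> exists del, 0 < del /\
  forall t', Rabs (t' - t) < del -> dist (F t) (F t') < eps.

Definition seg (y : pt) (t : R) : pt := (t * fst y, t * snd y).

Lemma seg_cont y : cont1 (seg y).
Proof.
  intros t eps He. set (M := Rabs (fst y) + Rabs (snd y) + 1).
  assert (HM : 0 < M) by (unfold M; pose proof (Rabs_pos (fst y)); pose proof (Rabs_pos (snd y)); lra).
  exists (eps / M). split. apply Rdiv_lt_0_compat; lra.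
  intros t' Ht. eapply Rle_lt_trans. apply dist_le_sum. unfold seg; simpl.
  replace (t * fst y - t' * fst y) with ((t - t') * fst y) by ring.
  replace (t * snd y - t' * snd y) with ((t - t') * snd y) by ring.
  rewrite !Rabs_mult. rewrite (Rabs_minus_sym t t').
  pose proof (Rabs_pos (fst y)); pose proof (Rabs_pos (snd y)); pose proof (Rabs_pos (t' - t)).
  assert (Rabs (t' - t) * M < eps).
  { apply Rmult_lt_reg_r with (/ M). apply Rinv_0_lt_compat; auto.
    rewrite Rmult_assoc, Rinv_r by lra. lra. }
  unfold M in *. nra.
Qed.

Lemma comp_cont1 (f : pt -> pt) F : continuous2 f -> cont1 F -> cont1 (fun t => f (F t)).
Proof.
  intros Hf HF t eps He. destruct (Hf (F t) eps He) as [d [Hd Hd']].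
  destruct (HF t d Hd) as [d2 [Hd2 Hd2']]. exists d2. split; auto.
Qed.

Lemma lift_unique (phi f g : pt -> pt) :
  (forall x, exists U, is_open U /\ U x /\ (forall y z, U y -> U z -> phi y = phi z -> y = z)) ->
  continuous2 f -> continuous2 g -> f origin = g origin -> (forall x, phi (f x) = phi (g x)) ->
  forall y, f y = g y.
Proof.
  intros Hphi Hf Hg H0 Hfg y.
  assert (HF := comp_cont1 f (seg y) Hf (seg_cont y)).
  assert (HG := comp_cont1 g (seg y) Hg (seg_cont y)).
  assert (Hall : forall t, 0 <= t <= 1 -> f (seg y t) = g (seg y t)).
  { apply real_ind. intros t Ht IH.
    assert (Pt : f (seg y t) = g (seg y t)).
    { destruct (Req_dec t 0) as [->|Htn].
      - unfold seg. rewrite !Rmult_0_l. exact H0.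
      - apply NNPP. intro Hne. pose proof (dist_pos _ _ Hne) as Hd0.
        set (d0 := dist (f (seg y t)) (g (seg y t))) in *.
        destruct (HF t (d0/2)) as [d1 [Hd1 Hd1']]; [lra|].
        destruct (HG t (d0/2)) as [d2 [Hd2 Hd2']]; [lra|].
        set (s := Rmax 0 (t - Rmin d1 d2 / 2)).
        assert (Hs : 0 <= s < t /\ Rabs (s - t) < Rmin d1 d2).
        { assert (0 < Rmin d1 d2) by (apply Rmin_pos; auto).
          pose proof (Rmax_l 0 (t - Rmin d1 d2 / 2)). pose proof (Rmax_r 0 (t - Rmin d1 d2 / 2)).
          assert (s < t). { apply Rmax_lub_lt; lra. }
          fold s in H1, H2. split. lra. rewrite Rabs_left; lra. }
        destruct Hs as [Hs1 Hs2].
        assert (E := IH s Hs1).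
        pose proof (Hd1' s ltac:(pose proof (Rmin_l d1 d2); lra)) as A1.
        pose proof (Hd2' s ltac:(pose proof (Rmin_r d1 d2); lra)) as A2.
        pose proof (dist_tri (f (seg y t)) (f (seg y s)) (g (seg y t))) as A3.
        rewrite E in A3. rewrite (dist_sym (g (seg y s))) in A3. fold d0 in A3. rewrite E in A1. lra. }
    destruct (Hphi (f (seg y t))) as [U [HU [HUx HUi]]].
    destruct (HU _ HUx) as [e [He He']].
    destruct (HF t e He) as [d1 [Hd1 Hd1']].
    destruct (HG t e He) as [d2 [Hd2 Hd2']].
    exists (Rmin d1 d2). split. apply Rmin_pos; auto.
    intros s Hs Hs'. destruct (Rlt_le_dec s t). apply IH; lra.
    assert (Rabs (s - t) < Rmin d1 d2) by (rewrite Rabs_right; lra).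
    apply HUi. apply He'. apply Hd1'. pose proof (Rmin_l d1 d2); lra.
    apply He'. rewrite Pt. apply Hd2'. pose proof (Rmin_r d1 d2); lra.
    apply Hfg. }
  specialize (Hall 1 ltac:(lra)). unfold seg in Hall. rewrite !Rmult_1_l in Hall.
  destruct y; exact Hall.
Qed.

Lemma polar_rot (A th b1 b2 : R) : 0 < A ->
  0 < (A * cos th) * b1 + (A * sin th) * b2 ->
  0 < sqrt (b1^2 + b2^2) /\
  b1 = sqrt (b1^2 + b2^2) * cos (th + atan (((A * cos th) * b2 - (A * sin th) * b1) / ((A * cos th) * b1 + (A * sin th) * b2))) /\
  b2 = sqrt (b1^2 + b2^2) * sin (th + atan (((A * cos th) * b2 - (A * sin th) * b1) / ((A * cos th) * b1 + (A * sin th) * b2))).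
Proof.
  intros HA Hdot.
  set (c := cos th) in *. set (s := sin th) in *.
  assert (Hcs : s^2 + c^2 = 1) by (pose proof (sin2_cos2 th); unfold Rsqr in *; fold c s in H; simpl; lra).
  set (dot := A * c * b1 + A * s * b2) in *.
  set (cr := A * c * b2 - A * s * b1).
  set (B := sqrt (b1^2 + b2^2)).
  assert (HBsq : B * B = b1^2 + b2^2). { apply sqrt_sqrt. nra. }
  assert (HB : 0 < B).
  { apply sqrt_lt_R0. destruct (Req_dec b1 0); destruct (Req_dec b2 0).
    - subst dot. rewrite H, H0 in Hdot. lra.
    - pose proof (Rsqr_pos_lt b2 H0) as X; unfold Rsqr in X; nra.
    - pose proof (Rsqr_pos_lt b1 H) as X; unfold Rsqr in X; nra.
    - pose proof (Rsqr_pos_lt b1 H) as X; unfold Rsqr in X; nra. }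
  assert (Hlag : dot^2 + cr^2 = (A * B)^2).
  { unfold dot, cr. replace ((A*B)^2) with (A^2 * (B * B)) by ring. rewrite HBsq.
    transitivity (A^2*(s^2+c^2)*(b1^2+b2^2)); [ring | rewrite Hcs; ring]. }
  assert (Hsq : sqrt (1 + (cr/dot)²) = A * B / dot).
  { rewrite <- (sqrt_Rsqr (A * B / dot)).
    2:{ apply Rlt_le. apply Rdiv_lt_0_compat; nra. }
    f_equal. unfold Rsqr. field_simplify; [|lra|lra].
    replace (cr ^ 2 + dot ^ 2) with ((A*B)^2) by lra. unfold Rdiv. ring. }
  rewrite cos_plus, sin_plus, cos_atan, sin_atan, Hsq.
  fold B. split; auto.
  fold c s.
  assert (E1 : c * dot - s * cr = A * b1).
  { unfold dot, cr. transitivity (A*b1*(s^2+c^2)); [ring | rewrite Hcs; ring]. }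
  assert (E2 : s * dot + c * cr = A * b2).
  { unfold dot, cr. transitivity (A*b2*(s^2+c^2)); [ring | rewrite Hcs; ring]. }
  split.
  - replace (B * (c * (1 / (A * B / dot)) - s * (cr / dot / (A * B / dot)))) with ((c * dot - s * cr) / A)
      by (field; repeat split; lra).
    rewrite E1. field. lra.
  - replace (B * (s * (1 / (A * B / dot)) + c * (cr / dot / (A * B / dot)))) with ((s * dot + c * cr) / A)
      by (field; repeat split; lra).
    rewrite E2. field. lra.
Qed.

Lemma cont1_fst F : cont1 F -> forall t, continuity_pt (fun t => fst (F t)) t.
Proof.
  intros HF t. apply cpt_intro. intros eps He. destruct (HF t eps He) as [d [Hd Hd']].
  exists d. split; auto. intros y Hy. rewrite Rabs_minus_sym. eapply Rle_lt_trans. apply dist_fst. auto.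
Qed.

Lemma cont1_snd F : cont1 F -> forall t, continuity_pt (fun t => snd (F t)) t.
Proof.
  intros HF t. apply cpt_intro. intros eps He. destruct (HF t eps He) as [d [Hd Hd']].
  exists d. split; auto. intros y Hy. rewrite Rabs_minus_sym. eapply Rle_lt_trans. apply dist_snd. auto.
Qed.

Lemma cpt_cst (k : R) t : continuity_pt (fun _ => k) t.
Proof. apply continuity_pt_const. intros x y; reflexivity. Qed.

Lemma perturb (alpha beta : R -> pt) (p : pt) :
  cont1 alpha -> cont1 beta -> winds_once alpha p ->
  alpha 0 = alpha 1 -> beta 0 = beta 1 ->
  (forall t, 0 <= t <= 1 -> dist (beta t) (alpha t) < dist (alpha t) p) ->
  winds_once beta p.
Proof.
  intros Ha Hb [th [Hth [Hpol Hwind]]] Ha01 Hb01 Hclose.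
  set (a1 := fun t => fst (alpha t) - fst p).
  set (a2 := fun t => snd (alpha t) - snd p).
  set (b1 := fun t => fst (beta t) - fst p).
  set (b2 := fun t => snd (beta t) - snd p).
  set (dot := fun t => a1 t * b1 t + a2 t * b2 t).
  set (cr := fun t => a1 t * b2 t - a2 t * b1 t).
  set (del := fun t => atan (cr t / dot t)).
  assert (Hdot : forall t, 0 <= t <= 1 -> 0 < dot t).
  { intros t Ht. specialize (Hclose t Ht). unfold dist in Hclose. apply sqrt_lt_0_alt in Hclose.
    unfold dot, a1, a2, b1, b2.
    destruct (alpha t) as [x1 x2]. destruct (beta t) as [y1 y2]. destruct p as [p1 p2]. simpl in *.
    pose proof (Rle_0_sqr (y1 - p1)); pose proof (Rle_0_sqr (y2 - p2)). unfold Rsqr in *. nra. }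
  assert (Hcd : forall t, 0 <= t <= 1 -> continuity_pt del t).
  { intros t Ht.
    assert (C1 : continuity_pt a1 t) by (apply (continuity_pt_minus (fun t => fst (alpha t)) (fun _ => fst p)); [apply cont1_fst; auto | apply cpt_cst]).
    assert (C2 : continuity_pt a2 t) by (apply (continuity_pt_minus (fun t => snd (alpha t)) (fun _ => snd p)); [apply cont1_snd; auto | apply cpt_cst]).
    assert (C3 : continuity_pt b1 t) by (apply (continuity_pt_minus (fun t => fst (beta t)) (fun _ => fst p)); [apply cont1_fst; auto | apply cpt_cst]).
    assert (C4 : continuity_pt b2 t) by (apply (continuity_pt_minus (fun t => snd (beta t)) (fun _ => snd p)); [apply cont1_snd; auto | apply cpt_cst]).
    assert (Cd : continuity_pt dot t) by (apply (continuity_pt_plus (fun t => a1 t * b1 t) (fun t => a2 t * b2 t)); [apply (continuity_pt_mult a1 b1) | apply (continuity_pt_mult a2 b2)]; auto).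
    assert (Cc : continuity_pt cr t) by (apply (continuity_pt_minus (fun t => a1 t * b2 t) (fun t => a2 t * b1 t)); [apply (continuity_pt_mult a1 b2) | apply (continuity_pt_mult a2 b1)]; auto).
    assert (Cq : continuity_pt (fun t => cr t / dot t) t).
    { apply (continuity_pt_div cr dot); auto. specialize (Hdot t Ht). lra. }
    apply (continuity_pt_comp (fun t => cr t / dot t) atan); auto.
    apply derivable_continuous_pt, derivable_pt_atan. }
  exists (fun t => th t + del t). split; [|split].
  - intros t Ht eps He. destruct (Hth t Ht (eps/2)) as [d1 [Hd1 Hd1']]; [lra|].
    destruct (cpt_elim _ _ (Hcd t Ht) (eps/2)) as [d2 [Hd2 Hd2']]; [lra|].
    exists (Rmin d1 d2). split. apply Rmin_pos; auto.
    intros u Hu Htu. pose proof (Rmin_l d1 d2). pose proof (Rmin_r d1 d2).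
    specialize (Hd1' u Hu ltac:(lra)). specialize (Hd2' u ltac:(rewrite Rabs_minus_sym; lra)).
    replace (th t + del t - (th u + del u)) with ((th t - th u) + - (del u - del t)) by ring.
    eapply Rle_lt_trans. apply Rabs_triang. rewrite Rabs_Ropp. lra.
  - intros t Ht. destruct (Hpol t Ht) as [HA [E1 E2]].
    assert (Hd := Hdot t Ht).
    unfold dot, a1, a2 in Hd. rewrite E1, E2 in Hd.
    destruct (polar_rot (dist (alpha t) p) (th t) (b1 t) (b2 t) HA Hd) as [P1 [P2 P3]].
    assert (Edel : del t = atan ((dist (alpha t) p * cos (th t) * b2 t - dist (alpha t) p * sin (th t) * b1 t) /
         (dist (alpha t) p * cos (th t) * b1 t + dist (alpha t) p * sin (th t) * b2 t))).
    { unfold del, cr, dot, a1, a2. rewrite E1, E2. reflexivity. }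
    rewrite Edel. change (dist (beta t) p) with (sqrt (b1 t ^ 2 + b2 t ^ 2)).
    split; [auto|split]; [exact P2 | exact P3].
  - assert (del 1 = del 0). { unfold del, cr, dot, a1, a2, b1, b2. rewrite Ha01, Hb01. reflexivity. }
    rewrite H. lra.
Qed.

Lemma compact_unif (Rl : R -> R -> Prop) :
  (forall c c' s, 0 < c' <= c -> Rl c s -> Rl c' s) ->
  (forall t, 0 <= t <= 1 -> exists c, 0 < c /\ exists d, 0 < d /\ forall s, Rabs (s - t) < d -> Rl c s) ->
  exists c, 0 < c /\ forall s, 0 <= s <= 1 -> Rl c s.
Proof.
  intros Hmon Hloc.
  assert (Hall : forall t, 0 <= t <= 1 -> exists c, 0 < c /\ forall s, 0 <= s <= t -> Rl c s).
  2:{ destruct (Hall 1 ltac:(lra)) as [c [Hc Hc']]. exists c. split; auto. }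
  apply real_ind. intros t Ht IH. destruct (Hloc t Ht) as [c0 [Hc0 [d [Hd Hd']]]].
  set (s0 := Rmax 0 (t - d/2)).
  pose proof (Rmax_l 0 (t - d/2)) as M1. pose proof (Rmax_r 0 (t - d/2)) as M2. fold s0 in M1, M2.
  destruct (Rlt_le_dec s0 t) as [Hlt|Hge].
  - destruct (IH s0 ltac:(lra)) as [c1 [Hc1 Hc1']].
    exists d. split; auto. intros s Hs Hst. exists (Rmin c0 c1). split. apply Rmin_pos; auto.
    intros s' Hs'. destruct (Rle_lt_dec s' s0).
    + apply Hmon with c1. split. apply Rmin_pos; auto. apply Rmin_r. apply Hc1'. lra.
    + apply Hmon with c0. split. apply Rmin_pos; auto. apply Rmin_l. apply Hd'.
      apply Rabs_def1; lra.
  - assert (t = 0). { destruct (Req_dec t 0); auto. assert (s0 < t) by (apply Rmax_lub_lt; lra). lra. }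
    exists d. split; auto. intros s Hs Hst. exists c0. split; auto.
    intros s' Hs'. apply Hd'. apply Rabs_def1; lra.
Qed.

Lemma min_dist (F : R -> pt) (p : pt) : cont1 F -> (forall t, 0 <= t <= 1 -> F t <> p) ->
  exists m, 0 < m /\ forall t, 0 <= t <= 1 -> m <= dist (F t) p.
Proof.
  intros HF Hne. apply (compact_unif (fun m s => m <= dist (F s) p)).
  - intros; lra.
  - intros t Ht. pose proof (dist_pos _ _ (Hne t Ht)) as HD.
    exists (dist (F t) p / 2). split. lra.
    destruct (HF t (dist (F t) p / 2)) as [d [Hd Hd']]; [lra|].
    exists d. split; auto. intros s Hs. specialize (Hd' s Hs).
    pose proof (dist_tri (F t) (F s) p). lra.
Qed.

Definition cont2 (G : R -> R -> pt) : Prop := forall u t eps, 0 < eps -> exists del, 0 < del /\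
  forall u' t', Rabs (u' - u) < del -> Rabs (t' - t) < del -> dist (G u t) (G u' t') < eps.

Lemma cont2_1 G u : cont2 G -> cont1 (G u).
Proof.
  intros HG t eps He. destruct (HG u t eps He) as [d [Hd Hd']]. exists d. split; auto.
  intros t' Ht'. apply Hd'; auto. unfold Rminus. rewrite Rplus_opp_r, Rabs_R0. auto.
Qed.

Lemma tube (G : R -> R -> pt) u0 eta : cont2 G -> 0 < eta ->
  exists d, 0 < d /\ forall s, 0 <= s <= 1 -> forall u, Rabs (u - u0) < d -> dist (G u s) (G u0 s) < eta.
Proof.
  intros HG He. apply (compact_unif (fun d s => forall u, Rabs (u - u0) < d -> dist (G u s) (G u0 s) < eta)).
  - intros c c' s Hc H u Hu. apply H. lra.
  - intros t Ht. destruct (HG u0 t (eta/2)) as [d [Hd Hd']]; [lra|].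
    exists d. split; auto. exists d. split; auto. intros s Hs u Hu.
    pose proof (Hd' u s Hu Hs) as X1. pose proof (Hd' u0 s ltac:(unfold Rminus; rewrite Rplus_opp_r, Rabs_R0; auto) Hs) as X2.
    pose proof (dist_tri (G u s) (G u0 t) (G u0 s)) as X3. rewrite (dist_sym (G u s) (G u0 t)) in X3. lra.
Qed.

Lemma homotopy_inv (G : R -> R -> pt) (p : pt) : cont2 G ->
  (forall u t, 0 <= u <= 1 -> 0 <= t <= 1 -> G u t <> p) ->
  (forall u, 0 <= u <= 1 -> G u 0 = G u 1) -> winds_once (G 0) p ->
  forall u, 0 <= u <= 1 -> winds_once (G u) p.
Proof.
  intros HG Hne Hloop H0. apply real_ind. intros u Hu IH.
  destruct (min_dist (G u) p (cont2_1 G u HG) (fun t Ht => Hne u t Hu Ht)) as [m [Hm Hm']].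
  destruct (tube G u (m/4) HG ltac:(lra)) as [d [Hd Hd']].
  set (ua := Rmax 0 (u - d/2)).
  pose proof (Rmax_l 0 (u - d/2)) as M1. pose proof (Rmax_r 0 (u - d/2)) as M2. fold ua in M1, M2.
  assert (Hua : winds_once (G ua) p /\ 0 <= ua <= 1 /\ Rabs (ua - u) < d).
  { assert (ua <= u) by (apply Rmax_lub; lra).
    split; [|split; [lra| apply Rabs_def1; lra]].
    destruct (Rlt_le_dec ua u). apply IH; lra.
    assert (u = 0). { destruct (Req_dec u 0); auto. assert (ua < u) by (apply Rmax_lub_lt; lra). lra. }
    assert (Eua : ua = 0) by lra. rewrite Eua. auto. }
  destruct Hua as [Hwa [Hua1 Hua2]].
  exists d. split; auto. intros u' Hu' Hu'd.
  destruct (Rlt_le_dec u' u) as [Hlt|Hge].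
  - destruct (Rle_lt_dec u' (u - d)).
    + apply IH; lra.
    + apply perturb with (G ua); try (apply cont2_1; auto); auto.
      * intros t Ht. pose proof (Hd' t Ht u' ltac:(apply Rabs_def1; lra)).
        pose proof (Hd' t Ht ua Hua2). pose proof (Hm' t Ht).
        pose proof (dist_tri (G u' t) (G u t) (G ua t)) as X5. rewrite (dist_sym (G u t) (G ua t)) in X5.
        pose proof (dist_tri (G u t) (G ua t) p) as X6. rewrite (dist_sym (G u t) (G ua t)) in X6. lra.
  - apply perturb with (G ua); try (apply cont2_1; auto); auto.
    intros t Ht. pose proof (Hd' t Ht u' ltac:(apply Rabs_def1; lra)).
    pose proof (Hd' t Ht ua Hua2). pose proof (Hm' t Ht).
    pose proof (dist_tri (G u' t) (G u t) (G ua t)) as X5. rewrite (dist_sym (G u t) (G ua t)) in X5.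
    pose proof (dist_tri (G u t) (G ua t) p) as X6. rewrite (dist_sym (G u t) (G ua t)) in X6. lra.
Qed.

Definition cont2r (f : R -> R -> R) : Prop := forall u t eps, 0 < eps -> exists del, 0 < del /\
  forall u' t', Rabs (u' - u) < del -> Rabs (t' - t) < del -> Rabs (f u' t' - f u t) < eps.

Lemma c2_u : cont2r (fun u t => u).
Proof. intros u t eps He. exists eps. split; auto. Qed.

Lemma c2_t (a : R -> R) : (forall t, continuity_pt a t) -> cont2r (fun u t => a t).
Proof.
  intros Ha u t eps He. destruct (cpt_elim a t (Ha t) eps He) as [d [Hd Hd']].
  exists d. split; auto.
Qed.

Lemma c2_cst k : cont2r (fun u t => k).
Proof. intros u t eps He. exists 1. split. lra. intros. unfold Rminus. rewrite Rplus_opp_r, Rabs_R0. auto. Qed.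

Lemma c2_plus f g : cont2r f -> cont2r g -> cont2r (fun u t => f u t + g u t).
Proof.
  intros Hf Hg u t eps He. destruct (Hf u t (eps/2)) as [d1 [Hd1 Hd1']]; [lra|].
  destruct (Hg u t (eps/2)) as [d2 [Hd2 Hd2']]; [lra|].
  exists (Rmin d1 d2). split. apply Rmin_pos; auto. intros u' t' Hu Ht.
  pose proof (Rmin_l d1 d2). pose proof (Rmin_r d1 d2).
  specialize (Hd1' u' t' ltac:(lra) ltac:(lra)). specialize (Hd2' u' t' ltac:(lra) ltac:(lra)).
  replace (f u' t' + g u' t' - (f u t + g u t)) with ((f u' t' - f u t) + (g u' t' - g u t)) by ring.
  eapply Rle_lt_trans. apply Rabs_triang. lra.
Qed.

Lemma c2_minus f g : cont2r f -> cont2r g -> cont2r (fun u t => f u t - g u t).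
Proof.
  intros Hf Hg u t eps He. destruct (Hf u t (eps/2)) as [d1 [Hd1 Hd1']]; [lra|].
  destruct (Hg u t (eps/2)) as [d2 [Hd2 Hd2']]; [lra|].
  exists (Rmin d1 d2). split. apply Rmin_pos; auto. intros u' t' Hu Ht.
  pose proof (Rmin_l d1 d2). pose proof (Rmin_r d1 d2).
  specialize (Hd1' u' t' ltac:(lra) ltac:(lra)). specialize (Hd2' u' t' ltac:(lra) ltac:(lra)).
  replace (f u' t' - g u' t' - (f u t - g u t)) with ((f u' t' - f u t) + - (g u' t' - g u t)) by ring.
  eapply Rle_lt_trans. apply Rabs_triang. rewrite Rabs_Ropp. lra.
Qed.

Lemma c2_mult f g : cont2r f -> cont2r g -> cont2r (fun u t => f u t * g u t).
Proof.
  intros Hf Hg u t eps He.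
  set (f0 := f u t). set (g0 := g u t).
  pose proof (Rabs_pos f0). pose proof (Rabs_pos g0).
  destruct (Hf u t (Rmin 1 (eps / (2 * (Rabs g0 + 1))))) as [d1 [Hd1 Hd1']].
  { apply Rmin_pos. lra. apply Rdiv_lt_0_compat; lra. }
  destruct (Hg u t (eps / (2 * (Rabs f0 + 2)))) as [d2 [Hd2 Hd2']].
  { apply Rdiv_lt_0_compat; lra. }
  exists (Rmin d1 d2). split. apply Rmin_pos; auto. intros u' t' Hu Ht.
  pose proof (Rmin_l d1 d2). pose proof (Rmin_r d1 d2).
  specialize (Hd1' u' t' ltac:(lra) ltac:(lra)). specialize (Hd2' u' t' ltac:(lra) ltac:(lra)).
  fold f0 g0 in Hd1', Hd2'. fold f0 g0.
  pose proof (Rmin_l 1 (eps / (2 * (Rabs g0 + 1)))). pose proof (Rmin_r 1 (eps / (2 * (Rabs g0 + 1)))).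
  replace (f u' t' * g u' t' - f0 * g0) with (f u' t' * (g u' t' - g0) + g0 * (f u' t' - f0)) by ring.
  eapply Rle_lt_trans. apply Rabs_triang. rewrite !Rabs_mult.
  assert (Rabs (f u' t') <= Rabs f0 + 1).
  { replace (f u' t') with (f0 + (f u' t' - f0)) by ring. eapply Rle_trans. apply Rabs_triang. lra. }
  set (k := eps / (2 * (Rabs f0 + 2))).
  assert (Hk : 0 < k) by (apply Rdiv_lt_0_compat; lra).
  assert (A1 : Rabs (f u' t') * Rabs (g u' t' - g0) <= (Rabs f0 + 1) * k).
  { apply Rmult_le_compat; try apply Rabs_pos.  lra. unfold k; lra. }
  assert (A1' : (Rabs f0 + 1) * k < eps / 2).
  { apply Rlt_le_trans with ((Rabs f0 + 2) * k). nra. unfold k. right. field. lra. }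
  assert (A2 : Rabs g0 * Rabs (f u' t' - f0) <= (Rabs g0 + 1) * (eps / (2 * (Rabs g0 + 1)))).
  { apply Rmult_le_compat; try apply Rabs_pos; lra. }
  replace ((Rabs g0 + 1) * (eps / (2 * (Rabs g0 + 1)))) with (eps/2) in A2 by (field; lra).
  lra.
Qed.

Lemma c2_comp (hh : R -> R) f : (forall x, continuity_pt hh x) -> cont2r f -> cont2r (fun u t => hh (f u t)).
Proof.
  intros Hh Hf u t eps He. destruct (cpt_elim hh (f u t) (Hh _) eps He) as [d [Hd Hd']].
  destruct (Hf u t d Hd) as [d2 [Hd2 Hd2']]. exists d2. split; auto.
Qed.

Lemma c2_pair f g : cont2r f -> cont2r g -> cont2 (fun u t => (f u t, g u t)).
Proof.
  intros Hf Hg u t eps He. destruct (Hf u t (eps/2)) as [d1 [Hd1 Hd1']]; [lra|].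
  destruct (Hg u t (eps/2)) as [d2 [Hd2 Hd2']]; [lra|].
  exists (Rmin d1 d2). split. apply Rmin_pos; auto. intros u' t' Hu Ht.
  pose proof (Rmin_l d1 d2). pose proof (Rmin_r d1 d2).
  specialize (Hd1' u' t' ltac:(lra) ltac:(lra)). specialize (Hd2' u' t' ltac:(lra) ltac:(lra)).
  eapply Rle_lt_trans. apply dist_le_sum. simpl. rewrite (Rabs_minus_sym (f u t)), (Rabs_minus_sym (g u t)). lra.
Qed.

Lemma c2_compg (g : pt -> pt) G : cont2 G -> (forall u t, cont_at g (G u t)) -> cont2 (fun u t => g (G u t)).
Proof.
  intros HG Hg u t eps He. destruct (Hg u t eps He) as [d [Hd Hd']].
  destruct (HG u t d Hd) as [d2 [Hd2 Hd2']]. exists d2. split; auto.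
Qed.

Definition clamp (t : R) : R := Rmax 0 (Rmin 1 t).

Lemma clamp_in t : 0 <= clamp t <= 1.
Proof. unfold clamp, Rmax, Rmin. destruct (Rle_dec 1 t); destruct (Rle_dec 0 _); lra. Qed.

Lemma clamp_id t : 0 <= t <= 1 -> clamp t = t.
Proof. intros. unfold clamp, Rmax, Rmin. destruct (Rle_dec 1 t); destruct (Rle_dec 0 _); lra. Qed.

Lemma clamp_lip a b : Rabs (clamp a - clamp b) <= Rabs (a - b).
Proof.
  unfold clamp, Rmax, Rmin.
  destruct (Rle_dec 1 a); destruct (Rle_dec 1 b); repeat (destruct (Rle_dec 0 _));
  unfold Rabs; repeat (destruct (Rcase_abs _)); lra.
Qed.

Lemma clamp_cont (th : R -> R) :
  (forall t, 0 <= t <= 1 -> forall eps, 0 < eps -> exists del, 0 < del /\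
       forall u, 0 <= u <= 1 -> Rabs (t - u) < del -> Rabs (th t - th u) < eps) ->
  forall t, continuity_pt (fun t => th (clamp t)) t.
Proof.
  intros Hth t. apply cpt_intro. intros eps He.
  destruct (Hth (clamp t) (clamp_in t) eps He) as [d [Hd Hd']].
  exists d. split; auto. intros y Hy. rewrite Rabs_minus_sym. apply Hd'. apply clamp_in.
  eapply Rle_lt_trans. apply clamp_lip. rewrite Rabs_minus_sym. auto.
Qed.

Lemma clamp_cpt t : continuity_pt clamp t.
Proof.
  apply cpt_intro. intros eps He. exists eps. split; auto. intros y Hy.
  eapply Rle_lt_trans. apply clamp_lip. auto.
Qed.

Lemma cpt_id t : continuity_pt (fun t => t) t.
Proof. apply cpt_intro. intros eps He. exists eps. split; auto. Qed.

Lemma circ_dist x s t : 0 <= s -> dist (circ x s t) x = s.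
Proof. intros. unfold circ. apply dist_polar. auto. Qed.

Lemma circ01 x s : circ x s 0 = circ x s 1.
Proof. unfold circ. rewrite !Rmult_0_r, !Rmult_1_r, cos_0, sin_0, cos_2PI, sin_2PI. reflexivity. Qed.

Lemma pair_cont1 (a b : R -> R) : (forall t, continuity_pt a t) -> (forall t, continuity_pt b t) ->
  cont1 (fun t => (a t, b t)).
Proof.
  intros Ha Hb t eps He. destruct (cpt_elim a t (Ha t) (eps/2)) as [d1 [Hd1 Hd1']]; [lra|].
  destruct (cpt_elim b t (Hb t) (eps/2)) as [d2 [Hd2 Hd2']]; [lra|].
  exists (Rmin d1 d2). split. apply Rmin_pos; auto. intros t' Ht.
  pose proof (Rmin_l d1 d2). pose proof (Rmin_r d1 d2).
  specialize (Hd1' t' ltac:(lra)). specialize (Hd2' t' ltac:(lra)).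
  eapply Rle_lt_trans. apply dist_le_sum. simpl. rewrite (Rabs_minus_sym (a t)), (Rabs_minus_sym (b t)). lra.
Qed.

Lemma circ_cont x s : cont1 (circ x s).
Proof.
  unfold circ. apply (pair_cont1 (fun t => fst x + s * cos (2 * PI * t)) (fun t => snd x + s * sin (2 * PI * t))).
  - intro t. apply (continuity_pt_plus (fun _ => fst x) (fun t => s * cos (2 * PI * t))). apply cpt_cst.
    apply (continuity_pt_mult (fun _ => s) (fun t => cos (2 * PI * t))). apply cpt_cst.
    apply (continuity_pt_comp (fun t => 2 * PI * t) cos). apply (continuity_pt_mult (fun _ => 2 * PI) (fun t => t)).
    apply cpt_cst. apply cpt_id. apply continuity_cos.
  - intro t. apply (continuity_pt_plus (fun _ => snd x) (fun t => s * sin (2 * PI * t))). apply cpt_cst.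
    apply (continuity_pt_mult (fun _ => s) (fun t => sin (2 * PI * t))). apply cpt_cst.
    apply (continuity_pt_comp (fun t => 2 * PI * t) sin). apply (continuity_pt_mult (fun _ => 2 * PI) (fun t => t)).
    apply cpt_cst. apply cpt_id. apply continuity_sin.
Qed.

Lemma winds_circ x s : 0 < s -> winds_once (circ x s) x.
Proof.
  intros Hs. exists (fun t => 2 * PI * t). split; [|split].
  - intros t Ht eps He. pose proof PI_RGT_0. exists (eps / (2 * PI)). split. apply Rdiv_lt_0_compat; lra.
    intros u Hu Htu. replace (2 * PI * t - 2 * PI * u) with (2 * PI * (t - u)) by ring.
    rewrite Rabs_mult, (Rabs_right (2 * PI)) by lra.
    apply Rmult_lt_reg_l with (/ (2 * PI)). apply Rinv_0_lt_compat; lra.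
    rewrite <- Rmult_assoc, Rinv_l by lra. unfold Rdiv in Htu. lra.
  - intros t Ht. rewrite circ_dist by lra. split; auto. unfold circ; simpl. split; ring.
  - ring.
Qed.

Lemma winds_ext g1 g2 p : (forall t, 0 <= t <= 1 -> g1 t = g2 t) -> winds_once g1 p -> winds_once g2 p.
Proof.
  intros E [th [H1 [H2 H3]]]. exists th. split; auto. split; auto.
  intros t Ht. rewrite <- (E t Ht). auto.
Qed.

Lemma dist_cpt F q : cont1 F -> forall t, continuity_pt (fun t => dist (F t) q) t.
Proof.
  intros HF t. apply cpt_intro. intros eps He. destruct (HF t eps He) as [d [Hd Hd']].
  exists d. split; auto. intros y Hy. specialize (Hd' y Hy).
  pose proof (dist_tri (F y) (F t) q). pose proof (dist_tri (F t) (F y) q).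
  rewrite (dist_sym (F y) (F t)) in H. apply Rabs_def1; lra.
Qed.

Lemma ball_open c r : is_open (fun z => dist c z < r).
Proof.
  intros z Hz. exists (r - dist c z). split. lra. intros z' Hz'.
  pose proof (dist_tri c z z'). lra.
Qed.

Lemma local_inverse (psi : pt -> pt) y : local_homeo psi ->
  exists e, 0 < e /\ exists eps, 0 < eps /\ exists g : pt -> pt,
    (forall z, dist y z < e -> g (psi z) = z) /\
    (forall w, dist (psi y) w < eps -> dist y (g w) < e /\ psi (g w) = w) /\
    (forall w, dist (psi y) w < eps -> cont_at g w).
Proof.
  intros [Hc Hl]. destruct (Hl y) as [U [HU [HUy [HUi HUo]]]].
  destruct (HU y HUy) as [e [He He']].
  set (V := fun z => dist y z < e).
  assert (HVo : is_open V) by apply ball_open.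
  assert (HVU : forall z, V z -> U z) by (intros; apply He'; auto).
  destruct (HUo V HVo HVU (psi y)) as [eps [Heps Heps']].
  { exists y. split; auto. unfold V. rewrite dist_refl. auto. }
  set (g := fun w => epsilon (inhabits origin) (fun v => V v /\ psi v = w)).
  assert (Hg : forall w, (exists v, V v /\ psi v = w) -> V (g w) /\ psi (g w) = w).
  { intros w Hw. apply (epsilon_spec (inhabits origin) (fun v => V v /\ psi v = w)). auto. }
  exists e. split; auto. exists eps. split; auto. exists g.
  assert (G1 : forall z, dist y z < e -> g (psi z) = z).
  { intros z Hz. destruct (Hg (psi z)) as [Hv Hp]. exists z. split; auto.
    apply HUi; auto. }
  assert (G2 : forall w, dist (psi y) w < eps -> dist y (g w) < e /\ psi (g w) = w).
  { intros w Hw. apply Hg. apply Heps'. auto. }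
  split; [auto|split; [auto|]].
  intros w Hw eta Heta.
  destruct (G2 w Hw) as [Gw1 Gw2].
  set (V' := fun z => dist (g w) z < eta /\ dist y z < e).
  assert (HV'o : is_open V').
  { intros z [Hz1 Hz2]. destruct (ball_open (g w) eta z Hz1) as [e1 [He1 He1']].
    destruct (ball_open y e z Hz2) as [e2 [He2 He2']].
    exists (Rmin e1 e2). split. apply Rmin_pos; auto. intros z' Hz'.
    pose proof (Rmin_l e1 e2). pose proof (Rmin_r e1 e2). split; [apply He1'|apply He2']; lra. }
  destruct (HUo V' HV'o (fun z Hz => HVU z (proj2 Hz)) w) as [d1 [Hd1 Hd1']].
  { exists (g w). split; auto. split; auto. rewrite dist_refl. auto. }
  destruct (ball_open (psi y) eps w Hw) as [d2 [Hd2 Hd2']].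
  exists (Rmin d1 d2). split. apply Rmin_pos; auto. intros w' Hw'.
  pose proof (Rmin_l d1 d2). pose proof (Rmin_r d1 d2).
  destruct (Hd1' w' ltac:(lra)) as [z [[Hz1 Hz2] Hz3]].
  destruct (G2 w' (Hd2' w' ltac:(lra))) as [Gw'1 Gw'2].
  assert (g w' = z). { apply HUi. apply HVU; auto. apply HVU; auto. congruence. }
  rewrite H1. auto.
Qed.

Lemma pt_eq (a b : pt) : fst a = fst b -> snd a = snd b -> a = b.
Proof. destruct a, b; simpl; intros; subst; auto. Qed.

Lemma op_transfer (phi psi h : pt -> pt) :
  local_homeo psi -> orientation_preserving psi -> orientation_preserving phi ->
  continuous2 h -> (forall a b, h a = h b -> a = b) -> (forall z, psi (h z) = phi z) ->
  orientation_preserving h.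
Proof.
  intros Hpsi Opsi Ophi Hh Hinj Hcomp x.
  set (y := h x). set (q := psi y).
  assert (Hq : q = phi x) by (unfold q, y; auto).
  destruct (local_inverse psi y Hpsi) as [e [He [eps [Heps [g [G1 [G2 G3]]]]]]].
  destruct (Opsi y) as [rp [Hrp Hrp']].
  destruct (Ophi x) as [rf [Hrf Hrf']].
  destruct (proj1 Hpsi y eps Heps) as [dp [Hdp Hdp']].
  destruct (Hh x (Rmin e dp) (Rmin_pos _ _ He Hdp)) as [dh [Hdh Hdh']].
  set (rho := Rmin rp (Rmin e dp) / 2).
  assert (Hrho : 0 < rho /\ rho < rp /\ rho < e /\ rho < dp).
  { pose proof (Rmin_l rp (Rmin e dp)). pose proof (Rmin_r rp (Rmin e dp)).
    pose proof (Rmin_l e dp). pose proof (Rmin_r e dp).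
    assert (0 < Rmin rp (Rmin e dp)) by (apply Rmin_pos; auto; apply Rmin_pos; auto).
    unfold rho. lra. }
  exists (Rmin rf dh). split. apply Rmin_pos; auto.
  intros s Hs. pose proof (Rmin_l rf dh). pose proof (Rmin_r rf dh).
  set (gam := fun t => h (circ x s t)).
  assert (Hgam : forall t, dist y (gam t) < e /\ dist q (psi (gam t)) < eps).
  { intros t. assert (dist x (circ x s t) < dh) by (rewrite dist_sym, circ_dist; lra).
    specialize (Hdh' _ H1). pose proof (Rmin_l e dp). pose proof (Rmin_r e dp).
    split. unfold gam, y. lra. apply Hdp'. unfold gam, y. lra. }
  assert (Hcir : forall t, dist y (circ y rho t) < e /\ dist q (psi (circ y rho t)) < eps).
  { intros t. assert (dist y (circ y rho t) = rho) by (rewrite dist_sym, circ_dist; lra).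
    split. lra. apply Hdp'. lra. }
  assert (Hgy : g q = y) by (apply G1; rewrite dist_refl; auto).
  destruct (Hrf' s ltac:(lra)) as [th1 [Ht1c [Ht1p Ht1w]]].
  destruct (Hrp' rho ltac:(lra)) as [th2 [Ht2c [Ht2p Ht2w]]].
  fold q in Ht2p. rewrite <- Hq in Ht1p.
  set (r1 := fun t => dist (psi (gam t)) q).
  set (r2 := fun t => dist (psi (circ y rho t)) q).
  assert (Hr1 : forall t, 0 < r1 t < eps).
  { intros t. split.
    - apply dist_pos. intro E. assert (gam t = y) by (rewrite <- (G1 (gam t)) by apply Hgam; rewrite E; auto).
      unfold gam, y in H1. apply Hinj in H1. assert (dist (circ x s t) x = s) by (apply circ_dist; lra).
      rewrite H1, dist_refl in H2. lra.
    - unfold r1. rewrite dist_sym. apply Hgam. }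
  assert (Hr2 : forall t, 0 < r2 t < eps).
  { intros t. split.
    - apply dist_pos. intro E. assert (circ y rho t = y) by (rewrite <- (G1 (circ y rho t)) by apply Hcir; rewrite E; auto).
      assert (dist (circ y rho t) y = rho) by (apply circ_dist; lra).
      rewrite H1, dist_refl in H2. lra.
    - unfold r2. rewrite dist_sym. apply Hcir. }
  set (Rr := fun u t => clamp u * r1 t + (1 - clamp u) * r2 t).
  set (Th := fun u t => clamp u * th1 (clamp t) + (1 - clamp u) * th2 (clamp t)).
  set (K := fun u t => (fst q + Rr u t * cos (Th u t), snd q + Rr u t * sin (Th u t))).
  set (G := fun u t => g (K u t)).
  assert (HRr : forall u t, 0 < Rr u t < eps).
  { intros u t. pose proof (clamp_in u). specialize (Hr1 t). specialize (Hr2 t). unfold Rr.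
    set (c := clamp u) in *. set (a := r1 t) in *. set (b := r2 t) in *.
    destruct (Rle_dec a b).
    - assert (0 <= c * (b - a)) by (apply Rmult_le_pos; lra).
      assert (0 <= (1 - c) * (b - a)) by (apply Rmult_le_pos; lra). nra.
    - assert (0 <= c * (a - b)) by (apply Rmult_le_pos; lra).
      assert (0 <= (1 - c) * (a - b)) by (apply Rmult_le_pos; lra). nra. }
  assert (HK : forall u t, dist (K u t) q = Rr u t).
  { intros u t. unfold K. apply dist_polar. specialize (HRr u t). lra. }
  assert (HKb : forall u t, dist q (K u t) < eps).
  { intros u t. rewrite dist_sym, HK. apply HRr. }
  assert (Cr1 : forall t, continuity_pt r1 t).
  { apply dist_cpt. unfold gam. apply comp_cont1. apply Hpsi. apply comp_cont1; auto. apply circ_cont. }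
  assert (Cr2 : forall t, continuity_pt r2 t).
  { apply dist_cpt. apply comp_cont1. apply Hpsi. apply circ_cont. }
  assert (Ccl : cont2r (fun u t => clamp u)).
  { apply (c2_comp clamp (fun u t => u)). apply clamp_cpt. apply c2_u. }
  assert (CRr : cont2r Rr).
  { unfold Rr. apply (c2_plus (fun u t => clamp u * r1 t) (fun u t => (1 - clamp u) * r2 t)).
    - apply (c2_mult (fun u t => clamp u) (fun u t => r1 t)); auto. apply c2_t; auto.
    - apply (c2_mult (fun u t => 1 - clamp u) (fun u t => r2 t)).
      apply (c2_minus (fun u t => 1) (fun u t => clamp u)); auto. apply c2_cst. apply c2_t; auto. }
  assert (CTh : cont2r Th).
  { unfold Th. apply (c2_plus (fun u t => clamp u * th1 (clamp t)) (fun u t => (1 - clamp u) * th2 (clamp t))).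
    - apply (c2_mult (fun u t => clamp u) (fun u t => th1 (clamp t))); auto. apply c2_t. apply clamp_cont; auto.
    - apply (c2_mult (fun u t => 1 - clamp u) (fun u t => th2 (clamp t))).
      apply (c2_minus (fun u t => 1) (fun u t => clamp u)); auto. apply c2_cst. apply c2_t. apply clamp_cont; auto. }
  assert (CK : cont2 K).
  { unfold K. apply (c2_pair (fun u t => fst q + Rr u t * cos (Th u t)) (fun u t => snd q + Rr u t * sin (Th u t))).
    - apply (c2_plus (fun u t => fst q) (fun u t => Rr u t * cos (Th u t))). apply c2_cst.
      apply (c2_mult Rr (fun u t => cos (Th u t))); auto. apply (c2_comp cos Th); auto. apply continuity_cos.
    - apply (c2_plus (fun u t => snd q) (fun u t => Rr u t * sin (Th u t))). apply c2_cst.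
      apply (c2_mult Rr (fun u t => sin (Th u t))); auto. apply (c2_comp sin Th); auto. apply continuity_sin. }
  assert (CG : cont2 G).
  { unfold G. apply (c2_compg g K); auto. }
  assert (HGne : forall u t, 0 <= u <= 1 -> 0 <= t <= 1 -> G u t <> y).
  { intros u t _ _ E. unfold G in E. destruct (G2 (K u t) (HKb u t)) as [_ E2].
    rewrite E in E2. fold q in E2. specialize (HK u t). rewrite <- E2, dist_refl in HK.
    specialize (HRr u t). lra. }
  assert (HGloop : forall u, 0 <= u <= 1 -> G u 0 = G u 1).
  { intros u _. unfold G. f_equal. unfold K.
    assert (E1 : Rr u 1 = Rr u 0).
    { unfold Rr, r1, r2, gam. rewrite circ01, (circ01 y). reflexivity. }
    assert (E2 : Th u 1 = Th u 0 + 2 * PI).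
    { unfold Th. rewrite (clamp_id 1), (clamp_id 0) by lra.
      replace (th1 1) with (th1 0 + 2 * PI) by lra. replace (th2 1) with (th2 0 + 2 * PI) by lra. ring. }
    rewrite E1, E2, cos_plus, sin_plus, cos_2PI, sin_2PI. f_equal; f_equal; f_equal; ring. }
  assert (HG0 : winds_once (G 0) y).
  { apply winds_ext with (circ y rho). 2: apply winds_circ; lra.
    intros t Ht. unfold G. rewrite <- (G1 (circ y rho t)) by apply Hcir. f_equal.
    destruct (Ht2p t Ht) as [_ [E1 E2]]. unfold K, Rr, Th. rewrite (clamp_id 0) by lra. rewrite (clamp_id t) by lra.
    change (dist (psi (circ y rho t)) q) with (r2 t) in E1, E2.
    replace (0 * r1 t + (1 - 0) * r2 t) with (r2 t) by ring.
    replace (0 * th1 t + (1 - 0) * th2 t) with (th2 t) by ring.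
    apply pt_eq; simpl; lra. }
  pose proof (homotopy_inv G y CG HGne HGloop HG0 1 ltac:(lra)) as HG1.
  apply winds_ext with (G 1); auto.
  intros t Ht. unfold G. fold (gam t). rewrite <- (G1 (gam t)) by apply Hgam. f_equal.
  destruct (Ht1p t Ht) as [_ [E1 E2]]. unfold K, Rr, Th. rewrite (clamp_id 1) by lra. rewrite (clamp_id t) by lra.
  assert (Eg : psi (gam t) = phi (circ x s t)) by (unfold gam; auto).
  assert (Er : r1 t = dist (phi (circ x s t)) q) by (unfold r1; rewrite Eg; auto).
  replace (1 * r1 t + (1 - 1) * r2 t) with (r1 t) by ring.
  replace (1 * th1 t + (1 - 1) * th2 t) with (th1 t) by ring.
  rewrite Eg, Er. apply pt_eq; simpl; lra.
Qed.

Lemma cont2_comp (f g : pt -> pt) : continuous2 f -> continuous2 g -> continuous2 (fun x => g (f x)).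
Proof.
  intros Hf Hg x eps He. destruct (Hg (f x) eps He) as [d [Hd Hd']].
  destruct (Hf x d Hd) as [d2 [Hd2 Hd2']]. exists d2. split; auto.
Qed.

Lemma cont2_id : continuous2 (fun x => x).
Proof. intros x eps He. exists eps. split; auto. Qed.

Lemma lh_inj (phi : pt -> pt) : local_homeo phi ->
  forall x, exists U, is_open U /\ U x /\ (forall y z, U y -> U z -> phi y = phi z -> y = z).
Proof. intros [_ H] x. destruct (H x) as [U [A [B [C _]]]]. exists U. auto. Qed.

Theorem mainTheorem1 :
  (forall phi psi : pt -> pt, pointed_lh phi -> pointed_lh psi ->
     immerses phi psi -> immerses psi phi -> iso phi psi) /\
  (forall phi : pt -> pt, pointed_lh phi -> immerses phi phi) /\
  (forall phi psi chi : pt -> pt, pointed_lh phi -> pointed_lh psi -> pointed_lh chi ->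
     immerses phi psi -> immerses psi chi -> immerses phi chi) /\
  (forall phi phi' psi psi' : pt -> pt,
     pointed_lh phi -> pointed_lh phi' -> pointed_lh psi -> pointed_lh psi' ->
     iso phi phi' -> iso psi psi' -> immerses phi psi -> immerses phi' psi').
Proof.
  split; [|split; [|split]].
  - intros phi psi [Lphi [Ophi _]] [Lpsi [Opsi _]] [io [Hio [Hio0 Hio1]]] [ka [Hka [Hka0 Hka1]]].
    assert (KI : forall x, ka (io x) = x).
    { apply (lift_unique phi (fun x => ka (io x)) (fun x => x)).
      apply lh_inj; auto. apply cont2_comp; auto. apply cont2_id. rewrite Hio0, Hka0; reflexivity.
      intros x. rewrite Hka1, Hio1. reflexivity. }
    assert (IK : forall x, io (ka x) = x).
    { apply (lift_unique psi (fun x => io (ka x)) (fun x => x)).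
      apply lh_inj; auto. apply cont2_comp; auto. apply cont2_id. rewrite Hka0, Hio0; reflexivity.
      intros x. rewrite Hio1, Hka1. reflexivity. }
    exists io. split; [|split; [|split]]; auto.
    + split; auto. exists ka. auto.
    + apply (op_transfer phi psi io); auto.
      intros a b E. rewrite <- (KI a), <- (KI b), E. reflexivity.
  - intros phi _. exists (fun x => x). split. apply cont2_id. split; reflexivity.
  - intros phi psi chi _ _ _ [i1 [Hi1 [Hi10 Hi11]]] [i2 [Hi2 [Hi20 Hi21]]].
    exists (fun x => i2 (i1 x)). split. apply cont2_comp; auto. split.
    rewrite Hi10, Hi20; reflexivity. intros x. rewrite Hi21, Hi11. reflexivity.
  - intros phi phi' psi psi' _ _ _ _ [h1 [[Ch1 [g1 [Cg1 [Ig1 Ig1']]]] [_ [H10 H11]]]]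
      [h2 [[Ch2 _] [_ [H20 H21]]]] [io [Hio [Hio0 Hio1]]].
    exists (fun x => h2 (io (g1 x))). split.
    apply cont2_comp; auto. apply cont2_comp; auto. split.
    + assert (g1 origin = origin) by (rewrite <- H10 at 1; apply Ig1).
      rewrite H, Hio0, H20. reflexivity.
    + intros x. rewrite H21, Hio1, <- H11, Ig1'. reflexivity.
Qed.
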